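(* Consider the evolution equation $\dot u=Au+Bu$ and methods (approximations $\Phi(h)$ of $e^{h(A+B)}$, with products read from left to right). (i) (Family I.) Let $\Phi^{[1]}(h)$ be a first-order method and define recursively, for $q=1,2,\dots$, $$\Phi^{[q+1]}(h)=\prod_{i=1}^{m_q}\Phi^{[q]}(\alpha_{q,i}h),$$ where for each $q$ the complex numbers $\alpha_{q,1},\dots,\alpha_{q,m_q}$ are all nonzero and satisfy $\sum_{i=1}^{m_q}\alpha_{q,i}=1$ and $\sum_{i=1}^{m_q}\alpha_{q,i}^{q+1}=0$ (so that $\Phi^{[q+1]}$ has order $q+1$). Then $\Phi^{[p+1]}(h)$ can be written as $$\Phi^{[p+1]}(h)=\prod_{i_p=1}^{m_p}\Big(\prod_{i_{p-1}=1}^{m_{p-1}}\Big(\cdots\Big(\prod_{i_1=1}^{m_1}\Phi^{[1]}(\alpha_{p,i_p}\alpha_{p-1,i_{p-1}}\cdots\alpha_{1,i_1}h)\Big)\cdots\Big)\Big),$$ and its coefficients are the products $\prod_{j=1}^p\alpha_{j,i_j}$, $1\le i_1\le m_1,\dots,1\le i_p\le m_p$. For every $p\geq 3$, every such method $\Phi^{[p+1]}(h)$ of order $p+1$ has at least one coefficient with negative real part. (ii) (Family II.) Let $\tilde\Phi^{[2]}(h)$ be a symmetric second-order method and define recursively, for $q=1,2,\dots$, the symmetric compositions $$\tilde\Phi^{[2q+2]}(h)=\prod_{i=1}^{m_q}\tilde\Phi^{[2q]}(\alpha_{q,i}h),$$ where for each $q$ the complex numbers $\alpha_{q,1},\dots,\alpha_{q,m_q}$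 are nonzero, satisfy $\alpha_{q,m_q+1-i}=\alpha_{q,i}$ for all $i$, $\sum_{i=1}^{m_q}\alpha_{q,i}=1$ and $\sum_{i=1}^{m_q}\alpha_{q,i}^{2q+1}=0$ (so that $\tilde\Phi^{[2q+2]}$ is symmetric of order $2q+2$). The coefficients of $\tilde\Phi^{[2p+2]}(h)$ are the products $\prod_{j=1}^p\alpha_{j,i_j}$, $1\le i_j\le m_j$, by which $h$ is multiplied in the corresponding expanded composition of $\tilde\Phi^{[2]}$. For every $p\geq 7$, every such method $\tilde\Phi^{[2p+2]}(h)$ of order $2p+2$ has at least one coefficient with negative real part.
   Context: A method $\Phi(h)$ is of order $p$ if $\Phi(h)-e^{h(A+B)}=\mathcal{O}(h^{p+1})$ as a formal expansion in $h$ for arbitrary non-commuting operators $A,B$. A method is symmetric if $\Phi(h)\Phi(-h)=\mathrm{Id}$. *)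

(* Defs.v *)
From HB Require Import structures.
From mathcomp Require Import all_boot all_order all_algebra.
From mathcomp Require Import complex.
From mathcomp Require Import reals.
Set Implicit Arguments. Unset Strict Implicit. Unset Printing Implicit Defensive.
Import Order.TTheory GRing.Theory Num.Theory.
Local Open Scope ring_scope.

(* Composition coefficients of level q: alpha q i, 0 <= i < m q (0-indexed). *)

Definition famI_cond (C : numClosedFieldType) (m : nat -> nat)
  (alpha : nat -> nat -> C) (q : nat) : Prop :=
  [/\ (forall i, (i < m q)%N -> alpha q i != 0),
      \sum_(i < m q) alpha q i = 1
    & \sum_(i < m q) alpha q i ^+ q.+1 = 0].

Definition famII_cond (C : numClosedFieldType) (m : nat -> nat)
  (alpha : nat -> nat -> C) (q : nat) : Prop :=
  [/\ (forall i, (i < m q)%N -> alpha q i != 0),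
      (forall i, (i < m q)%N -> alpha q (m q - 1 - i)%N = alpha q i),
      \sum_(i < m q) alpha q i = 1
    & \sum_(i < m q) alpha q i ^+ (2 * q).+1 = 0].

Definition is_coeff (C : numClosedFieldType) (m : nat -> nat)
  (alpha : nat -> nat -> C) (p : nat) (c : C) : Prop :=
  exists idx : nat -> nat,
    (forall j, (1 <= j <= p)%N -> (idx j < m j)%N) /\
    c = \prod_(1 <= j < p.+1) alpha j (idx j).

(* Main.v *)
Require Import Defs.
From HB Require Import structures.
From mathcomp Require Import all_boot all_order all_algebra.
From mathcomp Require Import complex.
From mathcomp Require Import reals.
From mathcomp Require Import boolp trigo.
From mathcomp Require Import ring lra.
Import Order.TTheory GRing.Theory Num.Theory.
Local Open Scope ring_scope.

Notation cRe := (@complex.Re _).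
Notation cIm := (@complex.Im _).
Section Basics.
Variable R : realType.
Local Open Scope complex_scope.
Definition ex (t : R) : R[i] := cos t +i* sin t.
Lemma exD a b : ex (a + b) = ex a * ex b.
Proof. rewrite /ex cosD sinD [sin a * cos b + _]addrC. reflexivity. Qed.
Lemma ReMc (z w : R[i]) : cRe (z * w) = cRe z * cRe w - cIm z * cIm w.
Proof. case: z => a b; case: w => c d. reflexivity. Qed.
Lemma ImMc (z w : R[i]) : cIm (z * w) = cRe z * cIm w + cIm z * cRe w.
Proof. case: z => a b; case: w => c d. reflexivity. Qed.
Lemma ReD (z w : R[i]) : cRe (z + w) = cRe z + cRe w.
Proof. case: z => a b; case: w => c d. reflexivity. Qed.
Lemma Re_real (r : R) : cRe (r%:C) = r. Proof. by []. Qed.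
Lemma Im_real (r : R) : cIm (r%:C) = 0. Proof. by []. Qed.
Lemma ex0 : ex 0 = 1.
Proof. by rewrite /ex cos0 sin0. Qed.
Lemma exX n t : ex t ^+ n = ex (t *+ n).
Proof. elim: n => [|n IH]; first by rewrite expr0 mulr0n ex0.
by rewrite exprS IH mulrS exD. Qed.
Lemma ex2pi t : ex (t + pi *+ 2) = ex t.
Proof. by rewrite /ex cosD2pi sinD2pi. Qed.
Lemma ReRM (r : R) (z : R[i]) : cRe (r%:C * z) = r * cRe z.
Proof. by rewrite ReMc /= mul0r subr0. Qed.
Lemma ImRM (r : R) (z : R[i]) : cIm (r%:C * z) = r * cIm z.
Proof. by rewrite ImMc /= mul0r addr0. Qed.
Lemma Re_sum (I : Type) (s : seq I) (P : pred I) (F : I -> R[i]) :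
  cRe (\sum_(i <- s | P i) F i) = \sum_(i <- s | P i) cRe (F i).
Proof. by elim/big_rec2: _ => // i x y _ <-; rewrite ReD. Qed.
Lemma rC_M (a b : R) : (a * b)%:C = a%:C * b%:C.
Proof. by rewrite rmorphM. Qed.
Lemma rC_X (a : R) n : (a ^+ n)%:C = a%:C ^+ n.
Proof. by rewrite rmorphXn. Qed.
Definition nrm (z : R[i]) : R := Num.sqrt (cRe z ^+ 2 + cIm z ^+ 2).
Definition arg (z : R[i]) : R :=
  if 0 <= cIm z then acos (cRe z / nrm z) else - acos (cRe z / nrm z).
Lemma polar z : z != 0 ->
  [/\ 0 < nrm z, - pi <= arg z <= pi & z = (nrm z)%:C * ex (arg z)].
Proof.
case: z => a b nz.
have h2 : 0 < a ^+ 2 + b ^+ 2.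
  have : (a != 0) || (b != 0).
    by apply: contraNT nz; rewrite negb_or !negbK => /andP[/eqP-> /eqP->].
  case/orP => h.
    by rewrite ltr_wpDr ?sqr_ge0 // lt_neqAle sqr_ge0 andbT eq_sym sqrf_eq0.
  by rewrite ltr_wpDl ?sqr_ge0 // lt_neqAle sqr_ge0 andbT eq_sym sqrf_eq0.
rewrite /arg /nrm /=.
set r := Num.sqrt _.
have r0 : 0 < r by rewrite sqrtr_gt0.
have rr : r ^+ 2 = a ^+ 2 + b ^+ 2 by rewrite sqr_sqrtr // ltW.
have hx2 : (a / r) ^+ 2 <= 1.
  by rewrite expr_div_n ler_pdivrMr ?exprn_gt0 // mul1r rr lerDl sqr_ge0.
have ha : -1 <= a / r <= 1.
  by apply/andP; split; nra.
have hs : Num.sqrt (1 - (a / r) ^+ 2) = `|b| / r.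
  have -> : 1 - (a / r) ^+ 2 = (b / r) ^+ 2.
    rewrite !expr_div_n rr -[X in X - _](divff (lt0r_neq0 h2)) -mulrBl.
    by rewrite addrAC subrr add0r.
  by rewrite sqrtr_sqr normrM normfV (gtr0_norm r0).
split => //.
  have A := acos_ge0 ha; have B := acos_lepi ha; have P := @pi_ge0 R.
  by case: ifP => _; apply/andP; split; lra.
apply/eqP; rewrite eq_complex /=; apply/andP; split; apply/eqP;
  rewrite mul0r ?subr0 ?addr0; case: ifP => hb.
- by rewrite acosK ?inE // mulrC divfK // gt_eqF.
- by rewrite cosN acosK ?inE // mulrC divfK // gt_eqF.
- by rewrite sin_acos // hs ger0_norm // mulrC divfK // gt_eqF.
- rewrite sinN sin_acos // hs ltr0_norm ?ltNge ?hb // mulrN mulrC divfK ?gt_eqF //.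
  by rewrite opprK.
Qed.
Lemma Reex t : cRe (ex t) = cos t. Proof. by []. Qed.
Lemma Imex t : cIm (ex t) = sin t. Proof. by []. Qed.
Lemma arg1 : arg 1 = 0.
Proof. rewrite /arg /nrm /= lexx expr1n expr0n /= addr0 sqrtr1 divr1. exact: acos1. Qed.
Lemma nrm1 : nrm 1 = 1.
Proof. by rewrite /nrm /= expr1n expr0n /= addr0 sqrtr1. Qed.

Lemma exists_max (f : nat -> R) m : (0 < m)%N ->
  exists k, (k < m)%N /\ forall i, (i < m)%N -> f i <= f k.
Proof.
elim: m => // -[|m] IH _.
  by exists 0%N; split => // i; rewrite ltnS leqn0 => /eqP->.
have [k [km hk]] := IH isT.
case: (leP (f m.+1) (f k)) => h.
  exists k; split; first by rewrite ltnW.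
  move=> i; rewrite ltnS leq_eqVlt => /orP[/eqP->//|]; exact: hk.
exists m.+1; split => // i; rewrite ltnS leq_eqVlt => /orP[/eqP->//|/hk hi].
by rewrite (le_trans hi) // ltW.
Qed.

Lemma exists_min (f : nat -> R) m : (0 < m)%N ->
  exists k, (k < m)%N /\ forall i, (i < m)%N -> f k <= f i.
Proof.
move=> m0; have [k [km hk]] := exists_max (fun i => - f i) m m0.
by exists k; split => // i /hk; rewrite lerN2.
Qed.

Lemma sum_gt0 (f : nat -> R) m : (0 < m)%N -> (forall i, (i < m)%N -> 0 < f i) ->
  0 < \sum_(i < m) f i.
Proof.
elim: m => // -[|m] IH _ h.
  by rewrite big_ord1; apply: h.
rewrite big_ord_recr /=; apply: ltr_pwDr; first exact: h.
by apply: ltW; apply: IH => // i hi; apply: h; rewrite ltnS ltnW.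
Qed.

Lemma level_pair (be : nat -> R[i]) m n : (2 <= n)%N ->
  (forall i, (i < m)%N -> be i != 0) -> \sum_(i < m) be i ^+ n = 0 ->
  (exists w, (w < m)%N /\ cIm (be w / be 0%N) != 0) ->
  exists a b s d, [/\ (a < m)%N, (b < m)%N, 0 < s, pi / n%:R <= d < pi
                    & be b = be a * (s%:C * ex d)].
Proof.
move=> n2 nz sum0 [w [wm hw]].
have m0 : (0 < m)%N by apply: leq_ltn_trans wm.
have b00 := nz 0%N m0.
pose ga i := be i / be 0%N.
pose dl i := arg (ga i).
pose sg i := nrm (ga i).
have gnz i : (i < m)%N -> ga i != 0 by move=> im; rewrite mulf_neq0 ?invr_eq0 ?nz.
have pol i : (i < m)%N -> [/\ 0 < sg i, - pi <= dl i <= pi & ga i = (sg i)%:C * ex (dl i)].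
  by move=> im; apply: polar; apply: gnz.
have ga0 : ga 0%N = 1 by rewrite /ga divff.
have dl0 : dl 0%N = 0 by rewrite /dl ga0 arg1.
have beE i : be i = be 0%N * ga i by rewrite /ga mulrC divfK.
set q := pi / n%:R.
have Nn : 2%:R <= n%:R :> R by rewrite ler_nat.
have q0 : 0 < q by rewrite divr_gt0 ?pi_gt0 // ltr0n (leq_trans _ n2).
have qN : q * n%:R = pi by rewrite /q divfK // pnatr_eq0 -lt0n (leq_trans _ n2).
have qpi : q *+ 2 <= pi by rewrite -qN -mulr_natr ler_wpM2l // ltW.
have pi0 := @pi_gt0 R.
pose bad x := exists d, q <= d < pi /\ ex x = ex d.
have badP x : (q <= x < pi) \/ (q <= x + pi *+ 2 < pi) \/ (q <= x - pi *+ 2 < pi) -> bad x.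
  case=> [h|[h|h]]; [exists x | exists (x + pi *+ 2) | exists (x - pi *+ 2)] => //.
  - by rewrite ex2pi.
  - by rewrite -[in LHS](subrK (pi *+ 2) x) ex2pi.
have relP a b : (a < m)%N -> (b < m)%N -> bad (dl b - dl a) ->
  exists a b s d, [/\ (a < m)%N, (b < m)%N, 0 < s, q <= d < pi
                    & be b = be a * (s%:C * ex d)].
  move=> am bm [d [hd he]].
  have [sa _ ea] := pol a am; have [sb _ eb] := pol b bm.
  exists a, b, (sg b / sg a), d; split => //; first by rewrite divr_gt0.
  rewrite -he beE (beE a) ea eb -mulrA; congr (_ * _).
  rewrite {1}(_ : dl b = dl a + (dl b - dl a)); last by rewrite addrC subrK.
  rewrite exD rC_M rmorphV ?unitfE ?gt_eqF //=.
  have : (sg a)%:C != 0 :> R[i] by rewrite eq_complex /= gt_eqF.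
  move=> h; field.
  exact: h.
apply: contrapT => Hn.
have H a b : (a < m)%N -> (b < m)%N -> ~ bad (dl b - dl a).
  by move=> am bm hb; apply: Hn; apply: relP hb.
have dlr i : (i < m)%N -> - pi <= dl i <= pi by move=> im; have [] := pol i im.
have S1 i : (i < m)%N -> (- q < dl i < q) \/ dl i = pi \/ dl i = - pi.
  move=> im; have h1 := H 0%N i m0 im; have h2 := H i 0%N im m0.
  rewrite dl0 subr0 in h1; rewrite dl0 sub0r in h2.
  have := dlr i im => hr.
  have k1 : ~ (q <= dl i < pi) by move=> hh; apply: h1; apply: badP; left.
  have k2 : ~ (q <= - dl i < pi) by move=> hh; apply: h2; apply: badP; left.
  move: k1 k2 => /negP k1 /negP k2; move: k1 k2.
  rewrite !negb_and -!ltNge -!leNgt => k1 k2.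
  case/orP: k1 => k1; case/orP: k2 => k2; lra.
have sw : sin (dl w) != 0.
  have [s0 _ e0] := pol w wm.
  by move: hw; rewrite -/(ga w) e0 ImRM mulf_eq0 negb_or => /andP[].
have q2 : q + q <= pi by rewrite -mulr2n.
have npi : ~ exists a, (a < m)%N /\ (dl a = pi \/ dl a = - pi).
  case=> a [am ha].
  have [sw0 swp swn] : [/\ dl w != 0, dl w != pi & dl w != - pi].
    by split; apply: contraNneq sw => ->; rewrite ?sin0 ?sinN ?sinpi ?oppr0.
  have : - q < dl w < q by case: (S1 w wm) => [//|[h|h]]; [move: swp | move: swn]; rewrite h eqxx.
  move=> /andP[wl wr].
  case: (ltgtP (dl w) 0) => [wn|wp|/eqP]; last by rewrite (negbTE sw0).
  - apply: (H a w am wm); apply: badP; rewrite mulr2n; lra.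
  - apply: (H w a wm am); apply: badP; rewrite mulr2n; lra.
have S2 i : (i < m)%N -> - q < dl i < q.
  move=> im; case: (S1 i im) => // h; case: npi; exists i; split => //.
have S3 a b : (a < m)%N -> (b < m)%N -> dl b - dl a < q.
  move=> am bm; have := H a b am bm.
  have := S2 a am; have := S2 b bm => /andP[? ?] /andP[? ?] hb.
  rewrite ltNge; apply/negP => hq; apply: hb; apply: badP; left; apply/andP; split => //.
  lra.
have [k1 [k1m hk1]] := exists_max dl m m0.
have [k2 [k2m hk2]] := exists_min dl m m0.
set c := (dl k1 + dl k2) / 2.
have Mm := S3 k2 k1 k2m k1m.
pose T := \sum_(i < m) (sg i ^+ n)%:C * ex ((dl i - c) *+ n).
have eT : \sum_(i < m) be i ^+ n = be 0%N ^+ n * ex (c *+ n) * T.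
  rewrite /T mulr_sumr; apply: eq_bigr => i _.
  have [_ _ e] := pol i (ltn_ord i).
  rewrite beE e !exprMn rC_X exX -!mulrA; congr (_ * _).
  rewrite mulrCA -exD -mulrnDl addrC subrK //.
have T0 : T = 0.
  move: sum0; rewrite eT => /eqP; rewrite !mulf_eq0 expf_eq0 (negbTE b00) andbF /=.
  case/orP => [/eqP he|/eqP //].
  have := exD (c *+ n) (- (c *+ n)); rewrite he mul0r subrr ex0 => /eqP.
  by rewrite oner_eq0.
have : 0 < cRe T.
  rewrite /T Re_sum.
  apply: (@sum_gt0 (fun i => cRe ((sg i ^+ n)%:C * ex ((dl i - c) *+ n)))) => // i im.
  rewrite ReRM Reex; apply: mulr_gt0; first by have [] := pol i im => h _ _; rewrite exprn_gt0.
  apply: cos_gt0_pihalf; rewrite -mulr_natr.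
  have := hk1 i im; have := hk2 i im => h1 h2.
  have N0 : 0 < n%:R :> R by lra.
  have hx : - (q / 2) < dl i - c < q / 2 by rewrite /c; apply/andP; split; lra.
  case/andP: hx => hx1 hx2.
  have p1 : 0 < (q / 2 - (dl i - c)) * n%:R by apply: mulr_gt0 => //; lra.
  have p2 : 0 < ((dl i - c) + q / 2) * n%:R by apply: mulr_gt0 => //; lra.
  have e2 : q / 2 * n%:R = pi / 2 by rewrite mulrAC qN.
  rewrite mulrBl e2 in p1; rewrite mulrDl e2 in p2.
  apply/andP; split; lra.
by rewrite T0 /= ltxx.
Qed.
Lemma creal (z : R[i]) : cIm z = 0 -> z = (cRe z)%:C.
Proof. by case: z => a b /= ->. Qed.

Lemma level_col (be : nat -> R[i]) m n : (0 < n)%N ->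
  (forall i, (i < m)%N -> be i != 0) -> \sum_(i < m) be i = 1 ->
  \sum_(i < m) be i ^+ n = 0 ->
  (forall i, (i < m)%N -> cIm (be i / be 0%N) = 0) ->
  (forall i, (i < m)%N -> cIm (be i) = 0) /\
  exists ps ng, [/\ (ps < m)%N, (ng < m)%N, 0 < cRe (be ps) & cRe (be ng) < 0].
Proof.
move=> n0 nz s1 sn col.
have m0 : (0 < m)%N by case: m nz s1 {sn col} => // _; rewrite big_ord0 => /eqP; rewrite eq_sym oner_eq0.
have b00 := nz 0%N m0.
pose t i := cRe (be i / be 0%N).
have beE i : (i < m)%N -> be i = be 0%N * (t i)%:C.
  by move=> im; rewrite -creal ?col // mulrC divfK.
have Tb : be 0%N * (\sum_(i < m) t i)%:C = 1.
  rewrite rmorph_sum mulr_sumr -s1; apply: eq_bigr => i _; by rewrite (beE i (ltn_ord i)).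
have T0 : (\sum_(i < m) t i) != 0.
  by apply: contra_eq_neq Tb => ->; rewrite mulr0 eq_sym oner_neq0.
have b0E : be 0%N = ((\sum_(i < m) t i)^-1)%:C.
  have Tc : (\sum_(i < m) t i)%:C != 0 :> R[i] by rewrite eq_complex /= negb_and T0.
  by rewrite -[LHS]mulr1 -(mulfV Tc) mulrA Tb mul1r rmorphV ?unitfE.
have Im0 i : (i < m)%N -> cIm (be i) = 0.
  by move=> im; rewrite beE // ImMc b0E /= !mul0r mulr0 addr0.
split => //.
pose x i := cRe (be i).
have xnz i : (i < m)%N -> x i != 0.
  move=> im; apply: contra (nz i im) => /eqP h; by rewrite (creal _ (Im0 i im)) -/(x i) h.
have sx : \sum_(i < m) x i ^+ n = 0.
  have : (\sum_(i < m) (x i ^+ n)%:C) = 0.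
    rewrite -[RHS]sn; apply: eq_bigr => i _; by rewrite rC_X -creal ?Im0.
  by rewrite -rmorph_sum => -[].
have [hp|hp] := pselect (exists ps, (ps < m)%N /\ 0 < x ps); last first.
  exfalso.
  have : 0 < \sum_(i < m) (- x i) ^+ n.
    apply: (@sum_gt0 (fun i => (- x i) ^+ n)) => // i im; apply: exprn_gt0.
    rewrite oppr_gt0 lt_neqAle xnz // andTb leNgt; apply/negP => h; apply: hp; by exists i.
  have -> : \sum_(i < m) (- x i) ^+ n = (-1) ^+ n * \sum_(i < m) x i ^+ n.
    by rewrite mulr_sumr; apply: eq_bigr => i _; rewrite -exprMn mulN1r.
  by rewrite sx mulr0 ltxx.
have [hn|hn] := pselect (exists ng, (ng < m)%N /\ x ng < 0); last first.
  exfalso.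
  have : 0 < \sum_(i < m) x i ^+ n.
    apply: (@sum_gt0 (fun i => x i ^+ n)) => // i im; apply: exprn_gt0.
    rewrite lt_neqAle eq_sym xnz // andTb leNgt; apply/negP => h; apply: hn; by exists i.
  by rewrite sx ltxx.
case: hp => ps [psm hps]; case: hn => ng [ngm hng].
by exists ps, ng.
Qed.
Definition upd (idx : nat -> nat) (j0 v : nat) := fun j => if j == j0 then v else idx j.

Lemma prod_upd (al : nat -> nat -> R[i]) p idx j0 v :
  (1 <= j0 <= p)%N -> al j0 (idx j0) != 0 ->
  \prod_(1 <= j < p.+1) al j (upd idx j0 v j) =
  \prod_(1 <= j < p.+1) al j (idx j) * (al j0 v / al j0 (idx j0)).
Proof.
move=> hj nz.
have mem : j0 \in index_iota 1 p.+1 by rewrite mem_index_iota ltnS.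
rewrite (bigD1_seq j0 mem (iota_uniq _ _)) (bigD1_seq j0 mem (iota_uniq _ _)) /=.
rewrite /upd eqxx.
have -> : \prod_(j <- index_iota 1 p.+1 | j != j0) al j (if j == j0 then v else idx j) =
          \prod_(j <- index_iota 1 p.+1 | j != j0) al j (idx j).
  by apply: eq_bigr => j /negbTE ->.
by field.
Qed.

Lemma crossing (psi : R) (d : nat -> R) p :
  - (pi / 2) <= psi <= pi / 2 ->
  (forall j, (1 <= j <= p)%N -> 0 < d j < pi) ->
  pi < \sum_(1 <= j < p.+1) d j ->
  exists k, (k <= p)%N /\ cos (psi + \sum_(1 <= j < k.+1) d j) < 0.
Proof.
move=> /andP[h1 h2] hd hS.
suff : forall k, (k <= p)%N -> psi + \sum_(1 <= j < k.+1) d j <= pi / 2 \/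
   exists k', (k' <= k)%N /\ cos (psi + \sum_(1 <= j < k'.+1) d j) < 0.
  case/(_ p (leqnn p)) => [h|[k' [hk' hc]]]; last by exists k'.
  have p0 := @pi_gt0 R; exfalso; lra.
elim=> [_|k IH kp].
  by left; rewrite big_geq // addr0.
case: (IH (ltnW kp)) => [hk|[k' [hk' hc]]]; last by right; exists k'; rewrite (leq_trans hk').
rewrite big_nat_recr //=.
have := hd k.+1; rewrite kp /= => /(_ isT) /andP[d1 d2].
case: (lerP (psi + (\sum_(1 <= j < k.+1) d j + d k.+1)) (pi / 2)) => hx; first by left.
right; exists k.+1; split => //; rewrite big_nat_recr //=.
set x := psi + _.
have -> : x = (x - pi) + pi by rewrite subrK.
rewrite cosDpi oppr_lt0; apply: cos_gt0_pihalf; rewrite /x; apply/andP; split; lra.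
Qed.

Lemma Im_prod_real (I : eqType) (r : seq I) (F : I -> R[i]) :
  (forall i, i \in r -> cIm (F i) = 0) -> cIm (\prod_(i <- r) F i) = 0.
Proof.
move=> h; rewrite big_seq; elim/big_ind: _ => //.
by move=> x y hx hy; rewrite ImMc hx hy !mulr0 mul0r addr0.
Qed.
Lemma core (m n : nat -> nat) (al : nat -> nat -> R[i]) p :
  (2 <= p)%N ->
  (forall j, (1 <= j <= p)%N -> [/\ (2 <= n j)%N, (forall i, (i < m j)%N -> al j i != 0),
        \sum_(i < m j) al j i = 1 & \sum_(i < m j) al j i ^+ n j = 0]) ->
  1 < \sum_(1 <= j < p.+1) (n j)%:R^-1 :> R ->
  exists idx, (forall j, (1 <= j <= p)%N -> (idx j < m j)%N) /\
     cRe (\prod_(1 <= j < p.+1) al j (idx j)) < 0.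
Proof.
move=> p2 hl hs.
pose P idx := \prod_(1 <= j < p.+1) al j (idx j).
pose valid idx := forall j, (1 <= j <= p)%N -> (idx j < m j)%N.
have mpos j : (1 <= j <= p)%N -> (0 < m j)%N.
  move=> hj; have [_ _ s1 _] := hl j hj; move: s1; case: (m j) => //.
  by rewrite big_ord0 => /eqP; rewrite eq_sym oner_eq0.
have Pnz idx : valid idx -> P idx != 0.
  move=> v; rewrite /P prodf_seq_neq0; apply/allP => j; rewrite mem_index_iota => hj /=.
  have [_ nz _ _] := hl j hj; exact: nz _ (v j hj).
have vupd idx j0 v : valid idx -> (v < m j0)%N -> valid (upd idx j0 v).
  move=> hv hvm j hj; rewrite /upd; case: eqP => [->//|_]; exact: hv.
have Pupd idx j0 v : valid idx -> (1 <= j0 <= p)%N ->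
    P (upd idx j0 v) = P idx * (al j0 v / al j0 (idx j0)).
  move=> hv hj; apply: prod_upd => //; have [_ nz _ _] := hl j0 hj; exact: nz _ (hv j0 hj).
pose col j := forall i, (i < m j)%N -> cIm (al j i / al j 0%N) = 0.
have ncol j : (1 <= j <= p)%N -> ~ col j ->
    exists w, (w < m j)%N /\ cIm (al j w / al j 0%N) != 0.
  move=> hj nj; apply: contrapT => hn; apply: nj => i im.
  case: (eqVneq (cIm (al j i / al j 0%N)) 0) => // hne; exfalso; apply: hn; by exists i.
have [[k [hk ck]]|nc] := pselect (exists k, (1 <= k <= p)%N /\ col k).
  have [n2 nzk s1k snk] := hl k hk.
  have [Imk [ps [ng [psm ngm hps hng]]]] :=
    @level_col (al k) (m k) (n k) (ltnW n2) nzk s1k snk ck.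
  pose idx0 := upd (fun _ => 0%N) k ps.
  have v0 : valid idx0 by apply: vupd => // j hj; exact: mpos.
  have c0nz := Pnz idx0 v0.
  set c0 := P idx0 in c0nz.
  pose t := cRe (al k ng) / cRe (al k ps).
  have t0 : t < 0 by rewrite /t pmulr_llt0 // invr_gt0.
  have rho : al k ng / al k ps = t%:C.
    rewrite (creal _ (Imk ng ngm)) (creal _ (Imk ps psm)) /t rmorphM rmorphV //.
    by rewrite unitfE gt_eqF.
  have e0k : idx0 k = ps by rewrite /idx0 /upd eqxx.
  have P1 : P (upd idx0 k ng) = c0 * t%:C by rewrite Pupd // e0k rho.
  have ReRt z : cRe (z * t%:C) = cRe z * t by rewrite mulrC ReRM mulrC.
  case: (ltgtP (cRe c0) 0) => hc.
  - by exists idx0; split.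
  - exists (upd idx0 k ng); split; first exact: vupd.
    by rewrite -/(P _) P1 ReRt pmulr_rlt0.
  have Imc : cIm c0 != 0.
    apply: contraNneq c0nz => h; apply/eqP; by rewrite (creal _ h) hc.
  have [[j [hj nj]]|allc] := pselect (exists j, (1 <= j <= p)%N /\ ~ col j).
    have [w [wm hw]] := ncol j hj nj.
    have jk : j != k by apply/eqP => ejk; apply: nj; rewrite ejk.
    set sg := al j w / al j 0%N in hw.
    have e0j : idx0 j = 0%N by rewrite /idx0 /upd (negbTE jk).
    pose idx1 := upd idx0 j w.
    have v1 : valid idx1 by apply: vupd.
    have P2 : P idx1 = c0 * sg by rewrite Pupd // e0j.
    have e1k : idx1 k = ps by rewrite /idx1 /upd eq_sym (negbTE jk) e0k.
    have P3 : P (upd idx1 k ng) = c0 * sg * t%:C by rewrite Pupd // e1k rho P2.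
    have Rsg : cRe (c0 * sg) = - (cIm c0 * cIm sg) by rewrite ReMc hc mul0r sub0r.
    have yz : cIm c0 * cIm sg != 0 by rewrite mulf_neq0.
    case: (ltgtP (cIm c0 * cIm sg) 0) => hy; last by move: yz; rewrite hy eqxx.
    + exists (upd idx1 k ng); split; first exact: vupd.
      by rewrite -/(P _) P3 ReRt Rsg pmulr_rlt0 // oppr_gt0.
    + exists idx1; split => //.
      by rewrite -/(P _) P2 Rsg oppr_lt0.
  exfalso; move/eqP: Imc; apply.
  rewrite /c0 /P; apply: Im_prod_real => j; rewrite mem_index_iota => hj.
  have cj : col j by apply: contrapT => h; apply: allc; exists j.
  have [n2j nzj s1j snj] := hl j hj.
  have [Imj _] := @level_col (al j) (m j) (n j) (ltnW n2j) nzj s1j snj cj.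
  exact: Imj _ (v0 j hj).
have pr j : exists x : nat * nat * R * R, (1 <= j <= p)%N ->
    [/\ (x.1.1.1 < m j)%N, (x.1.1.2 < m j)%N, 0 < x.1.2, pi / (n j)%:R <= x.2 < pi
      & al j x.1.1.2 = al j x.1.1.1 * (x.1.2%:C * ex x.2)].
  case: (boolP (1 <= j <= p)%N) => hj; last by exists (0%N, 0%N, 0, 0).
  have [n2 nzj s1j snj] := hl j hj.
  have hw := ncol j hj (fun h => nc (ex_intro _ j (conj hj h))).
  have [a [b [s [d [? ? ? ? ?]]]]] := @level_pair (al j) (m j) (n j) n2 nzj snj hw.
  by exists (a, b, s, d).
have [f hf] := choice pr.
pose a j := (f j).1.1.1; pose b j := (f j).1.1.2.
pose s j := (f j).1.2; pose d j := (f j).2.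
pose idxk k := fun j => if (j <= k)%N then b j else a j.
have vk k : valid (idxk k).
  by move=> j hj; have [? ? _ _ _] := hf j hj; rewrite /idxk; case: ifP.
have [r0 hpsi ec0] := polar _ (Pnz _ (vk 0%N)).
set r := nrm _ in r0 ec0; set psi := arg _ in hpsi ec0.
have Pk k : (k <= p)%N -> P (idxk k) =
    (r * \prod_(1 <= j < k.+1) s j)%:C * ex (psi + \sum_(1 <= j < k.+1) d j).
  elim: k => [_|k IH kp]; first by rewrite !big_geq // mulr1 addr0 -ec0.
  have hjk : (1 <= k.+1 <= p)%N by rewrite kp.
  have e : P (idxk k.+1) = P (upd (idxk k) k.+1 (b k.+1)).
    rewrite /P; apply: eq_big_nat => j hj; rewrite /upd /idxk.
    case: (eqVneq j k.+1) => [->|ne]; first by rewrite leqnn.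
    by rewrite leq_eqVlt (negbTE ne) ltnS.
  rewrite e Pupd // IH ?(ltnW kp) //.
  have ek : idxk k k.+1 = a k.+1 by rewrite /idxk ltnn.
  have [_ _ _ _ eb] := hf k.+1 hjk.
  have [_ nz _ _] := hl k.+1 hjk.
  have az : al k.+1 (a k.+1) != 0 by apply: nz; have [] := hf k.+1 hjk.
  rewrite ek -/(a _) -/(b _) -/(s _) -/(d _) in eb *.
  rewrite eb [al _ _ * _ / _]mulrAC divff // mul1r (big_nat_recr k.+1) //= (big_nat_recr k.+1) //= addrA exD !rC_M.
  rewrite !exD -!mulrA; do 2!congr (_ * _); rewrite [RHS]mulrCA; congr (_ * _); by rewrite [RHS]mulrCA.
have cpsi : cRe (P (idxk 0%N)) = r * cos psi by rewrite ec0 ReRM.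
case: (ltP (cRe (P (idxk 0%N))) 0) => hc0; first by exists (idxk 0%N); split; [apply: vk | exact: hc0].
have pi0 := @pi_gt0 R.
have hpsi2 : - (pi / 2) <= psi <= pi / 2.
  have cp : 0 <= cos psi by move: hc0; rewrite cpsi pmulr_rge0.
  case/andP: hpsi => h1 h2; apply/andP; split.
    rewrite leNgt; apply/negP => hl2.
    have : 0 < cos (psi + pi) by apply: cos_gt0_pihalf; apply/andP; split; lra.
    rewrite cosDpi; lra.
  rewrite leNgt; apply/negP => hl2.
  have : 0 < cos (psi - pi) by apply: cos_gt0_pihalf; apply/andP; split; lra.
  have := cosDpi (psi - pi); rewrite subrK => e.
  lra.
have dpos j : (1 <= j <= p)%N -> pi / (n j)%:R <= d j < pi by move=> hj; have [] := hf j hj.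
have hd : forall j, (1 <= j <= p)%N -> 0 < d j < pi.
  move=> j hj; have /andP[h1 h2] := dpos j hj; apply/andP; split => //.
  apply: lt_le_trans h1; rewrite divr_gt0 // ltr0n; have [n2 _ _ _] := hl j hj.
  exact: leq_trans n2.
have hS : pi < \sum_(1 <= j < p.+1) d j.
  apply: (@lt_le_trans _ _ (\sum_(1 <= j < p.+1) pi / (n j)%:R)).
    by rewrite -mulr_sumr ltr_pMr.
  by apply: ler_sum_nat => j hj; have /andP[] := dpos j hj.
have [k [kp hk]] := crossing _ _ p hpsi2 hd hS.
exists (idxk k); split; first exact: vk.
have := Pk k kp; rewrite /P => ->; rewrite ReRM Reex.
rewrite pmulr_rlt0 //; apply: mulr_gt0 => //.
rewrite big_seq; apply: prodr_gt0 => j.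
rewrite mem_index_iota => /andP[j1 j2].
have hj : (1 <= j <= p)%N by rewrite j1 (leq_trans _ kp).
by have [] := hf j hj.
Qed.
Lemma sum_mono (f : nat -> R) p0 p : (p0 <= p)%N ->
  (forall j, 0 <= f j) -> \sum_(1 <= j < p0.+1) f j <= \sum_(1 <= j < p.+1) f j.
Proof.
move=> hp hf; have hp' : (p0.+1 <= p.+1)%N by rewrite ltnS.
rewrite [X in _ <= X](big_cat_nat _ (n := p0.+1)) //=.
by rewrite lerDl sumr_ge0.
Qed.

Lemma ReC_lt0 (c : R[i]) : cRe c < 0 -> 'Re c < 0.
Proof. by move=> h; rewrite -complexRe ltcE /= eqxx. Qed.
End Basics.

Theorem theorem2p3 (R : realType) :
  (forall (p : nat) (m : nat -> nat) (alpha : nat -> nat -> R[i]),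
      (3 <= p)%N ->
      (forall q, (1 <= q <= p)%N -> famI_cond m alpha q) ->
      exists c, is_coeff m alpha p c /\ 'Re c < 0)
  /\
  (forall (p : nat) (m : nat -> nat) (alpha : nat -> nat -> R[i]),
      (7 <= p)%N ->
      (forall q, (1 <= q <= p)%N -> famII_cond m alpha q) ->
      exists c, is_coeff m alpha p c /\ 'Re c < 0).
Proof.
split.
- move=> p m al p3 hc.
  have [idx [v h]] : exists idx, (forall j, (1 <= j <= p)%N -> (idx j < m j)%N) /\
     cRe (\prod_(1 <= j < p.+1) al j (idx j)) < 0.
    apply: (@core R m (fun j => j.+1) al p (leq_trans _ p3)) => //.
      move=> j hj; have [h1 h2 h3] := hc j hj; split => //.
      by rewrite ltnS; case/andP: hj.
    have hb : 1 < \sum_(1 <= j < 3.+1) ((j.+1)%:R^-1 : R).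
      rewrite big_nat_recr //= big_nat_recr //= big_nat_recr //= big_geq //= add0r.
      lra.
    apply: (lt_le_trans hb).
    by apply: (@sum_mono R (fun j => ((j.+1)%:R^-1 : R)) 3 p p3) => j; rewrite invr_ge0.
  exists (\prod_(1 <= j < p.+1) al j (idx j)); split; first by exists idx.
  exact: ReC_lt0.
- move=> p m al p7 hc.
  have [idx [v h]] : exists idx, (forall j, (1 <= j <= p)%N -> (idx j < m j)%N) /\
     cRe (\prod_(1 <= j < p.+1) al j (idx j)) < 0.
    apply: (@core R m (fun j => (2 * j).+1) al p (leq_trans _ p7)) => //.
      move=> j hj; have [h1 _ h3 h4] := hc j hj; split => //.
      by rewrite ltnS; case/andP: hj => h _; rewrite (leq_trans h) // leq_pmull.
    have hb : 1 < \sum_(1 <= j < 7.+1) (((2 * j).+1)%:R^-1 : R).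
      do 7 (rewrite big_nat_recr //=). rewrite big_geq //= add0r.
      rewrite (_ : (2 * 1).+1 = 3%N) // (_ : (2 * 2).+1 = 5%N) // (_ : (2 * 3).+1 = 7%N) //.
      rewrite (_ : (2 * 4).+1 = 9%N) // (_ : (2 * 5).+1 = 11%N) //.
      rewrite (_ : (2 * 6).+1 = 13%N) // (_ : (2 * 7).+1 = 15%N) //.
      lra.
    apply: (lt_le_trans hb).
    by apply: (@sum_mono R (fun j => (((2 * j).+1)%:R^-1 : R)) 7 p p7) => j; rewrite invr_ge0.
  exists (\prod_(1 <= j < p.+1) al j (idx j)); split; first by exists idx.
  exact: ReC_lt0.
Qed.
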